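(* Let $k$ be a field of characteristic $p>0$ and $A$ a $k$-vector space of finite dimension $n\ge1$. For every $r\ge pn-1$, $S_{\le r}A=SA$.
   Context: $SA=\bigoplus_{m\ge0}S^mA$ is the symmetric algebra of $A$ ($S^0A=k$, $S^mA$ the $m$-th symmetric power, with pure symmetric tensors $a_1\otimes_s\dots\otimes_s a_m$). The linear map $\partial\colon SA\to SA\otimes A$ is given by $\partial(\lambda)=0$ for $\lambda\in S^0A$ and $\partial(a_1\otimes_s\dots\otimes_s a_m)=\sum_{i=1}^m(a_1\otimes_s\dots\otimes_s a_{i-1}\otimes_s a_{i+1}\otimes_s\dots\otimes_s a_m)\otimes a_i$. Iterates: $\partial^0=1_{SA}$ and $\partial^{r+1}:=\partial;(\partial^r\otimes 1_A)\colon SA\to SA\otimes A^{\otimes(r+1)}$. Define $S_{\le r}A:=\ker(\partial^{r+1})\subseteq SA$. *)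

(* Defs.v *)
From mathcomp Require Import all_boot all_order all_algebra.
From mathcomp Require Import mpoly.
Set Implicit Arguments. Unset Strict Implicit. Unset Printing Implicit Defensive.
Import GRing.Theory.
Local Open Scope ring_scope.

(* A = k^n with standard basis e_0..e_{n-1};  SA = S(k^n) = {mpoly k[n]}
   (x_j = e_j).  The basis of A^{(x) r} is indexed by words of length r,
   encoded left-nested: word n (r+1) = word n r * 'I_n, the last letter
   being the last (rightmost) tensor factor. An element of SA (x) A^{(x) r}
   is thus a function  word n r -> SA  (coefficients on the basis). *)
Fixpoint word (n r : nat) : Type :=
  match r with
  | 0 => unit
  | r'.+1 => (word n r' * 'I_n)%type
  end.

(* partial : SA -> SA (x) A.  On a pure symmetric tensor a_1 ... a_m it is
   sum_i (a_1..^a_i..a_m) (x) a_i; in coordinates its e_j-component is the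
   formal partial derivative with respect to x_j. *)
Definition partial (k : fieldType) (n : nat) (f : {mpoly k[n]}) : 'I_n -> {mpoly k[n]} :=
  fun j => mderiv j f.

(* partial^0 = 1,  partial^{r+1} = partial ; (partial^r (x) 1_A). *)
Fixpoint partial_pow (k : fieldType) (n r : nat) : {mpoly k[n]} -> word n r -> {mpoly k[n]} :=
  match r with
  | 0 => fun f _ => f
  | r'.+1 => fun f (w : word n r'.+1) => @partial_pow k n r' (partial f w.2) w.1
  end.

Definition S_le (k : fieldType) (n r : nat) (f : {mpoly k[n]}) : Prop :=
  forall w : word n r.+1, @partial_pow k n r.+1 f w = 0.

(* Main.v *)
Require Import Defs.
From mathcomp Require Import all_boot all_order all_algebra.
From mathcomp Require Import mpoly.
Local Open Scope ring_scope.
Import GRing.Theory.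
Set Implicit Arguments. Unset Strict Implicit.
From mathcomp Require Import zify.

Fixpoint wseq (n r : nat) : word n r -> seq 'I_n :=
  match r with
  | 0 => fun _ => [::]
  | r'.+1 => fun w => @wseq n r' w.1 ++ [:: w.2]
  end.

Lemma wseq_size n r (w : word n r) : size (wseq w) = r.
Proof. elim: r w => //= r IH [w j] /=; by rewrite size_cat IH addn1. Qed.

Lemma pp_foldr (k : fieldType) n r (f : {mpoly k[n]}) (w : word n r) :
  @partial_pow k n r f w = foldr (@mderiv n k) f (wseq w).
Proof.
elim: r f w => //= r IH f [w j] /=.
by rewrite IH foldr_cat.
Qed.

Lemma sum_count n (s : seq 'I_n) : (\sum_(j < n) count_mem j s)%N = size s.
Proof.
elim: s => [|x s IH] /=; first by rewrite big1.
rewrite big_split /= IH (bigD1 x) //= eqxx big1 ?addn0 //.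
by move=> j; rewrite eq_sym => /negbTE ->.
Qed.

Lemma iter_p_zero (k : fieldType) p n (j : 'I_n) (f : {mpoly k[n]}) :
  prime p -> p \in [pchar k] -> iter p (@mderiv n k j) f = 0.
Proof.
move=> pp pc; rewrite -mderivn_iter mderivmE big1 // => m' _.
rewrite natr_prod (bigD1 j) //= mulmnE mnm1E eqxx mul1n.
suff -> : ((m' j) ^_ p)%:R = 0 :> k by rewrite mul0r mulr0 scale0r.
apply/eqP; rewrite -(dvdn_pcharf pc).
case: (ltnP (m' j) p) => h; first by rewrite ffact_small.
rewrite -bin_ffact dvdn_mull // dvdn_fact // prime_gt0 // leqnn.
by [].
Qed.

Theorem proposition7p6 (k : fieldType) (p n : nat) :
  prime p -> (p \in [pchar k]) -> (1 <= n)%N ->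
  forall r : nat, (p * n - 1 <= r)%N ->
  forall f : {mpoly k[n]}, S_le r f.
Proof.
move=> pp pc n1 r hr f w.
rewrite pp_foldr.
set s := wseq w.
have hs : (p * n <= size s)%N by rewrite /s wseq_size; move: hr; clear; lia.
have [j hj] : exists j : 'I_n, (p <= count_mem j s)%N.
  apply/existsP; apply: contraLR hs; rewrite negb_exists => /forallP H.
  rewrite -ltnNge -sum_count.
  apply: (@leq_ltn_trans (\sum_(j < n) p.-1)%N).
    by apply: leq_sum => j _; move: (H j); rewrite -ltnNge; case: p pp {pc hr H} => //.
  rewrite sum_nat_const card_ord.
  have := prime_gt0 pp; clear -n1; nia.
have pe : perm_eq s (filter (predC (pred1 j)) s ++ nseq (count_mem j s - p) j ++ nseq p j).
  rewrite -nseqD subnK // -(perm_filterC (pred1 j) s) perm_catC perm_cat2l.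
  have /all_pred1P -> := filter_all (pred1 j) s.
  by rewrite size_filter.
rewrite (mderiv_perm _ pe) foldr_cat foldr_cat.
have e : foldr (@mderiv n k) f (nseq p j) = iter p (@mderiv n k j) f.
  elim: (p) => [|q IH] //. rewrite /= IH //.
rewrite e (iter_p_zero _ _ pp pc).
have z : forall t, foldr (@mderiv n k) 0 t = 0.
  elim => [|a t IH] //=. by rewrite IH mderiv0.
by rewrite !z.
Qed.
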